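(* Let $r>0$ be real, let $k_r\in(0,1)$ be the singular modulus, $k'^2_r=1-k_r^2$, and let $a(r)$ be the elliptic alpha function. For $n\ge 0$ let $$B^{(2)}_n=\sum_{j=0}^{n}\left[\binom{n}{j}\left(\tfrac12\right)_j\left(\tfrac12\right)_{n-j}\right]^2 .$$ Then $$\sum_{n=0}^{\infty}\frac{B^{(2)}_n}{(n!)^2}\,k_r^{2n}\left(\sqrt r\,k'^2_r\,n+a(r)-\sqrt r\,k_r^2\right)=\frac1\pi .$$
   Context: $K(x)=\int_0^{\pi/2}\frac{dt}{\sqrt{1-x^2\sin^2 t}}$ and $E(x)=\int_0^{\pi/2}\sqrt{1-x^2\sin^2 t}\,dt$. For $r>0$ the singular modulus $k_r\in(0,1)$ is the unique solution $w$ of $K(\sqrt{1-w^2})/K(w)=\sqrt r$. The elliptic alpha function is $a(r)=\frac{\pi}{4K(k_r)^2}-\sqrt r\left(\frac{E(k_r)}{K(k_r)}-1\right)$. $(a)_n=a(a+1)\cdots(a+n-1)$, $(a)_0=1$. *)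

(* Defs.v *)
From Stdlib Require Import Reals.
From Coquelicot Require Import Coquelicot.
Open Scope R_scope.

Definition ellK (x : R) : R :=
  RInt (fun t => / sqrt (1 - x ^ 2 * (sin t) ^ 2)) 0 (PI / 2).
Definition ellE (x : R) : R :=
  RInt (fun t => sqrt (1 - x ^ 2 * (sin t) ^ 2)) 0 (PI / 2).

(* w is the singular modulus k_r: w in (0,1) with K(sqrt(1-w^2))/K(w) = sqrt r
   (the solution is unique, so this characterizes k_r). *)
Definition is_singular_modulus (r w : R) : Prop :=
  0 < w < 1 /\ ellK (sqrt (1 - w ^ 2)) / ellK w = sqrt r.

Definition alpha_fn (r k : R) : R :=
  PI / (4 * (ellK k) ^ 2) - sqrt r * (ellE k / ellK k - 1).

Fixpoint poch (a : R) (n : nat) : R :=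
  match n with
  | O => 1
  | S m => poch a m * (a + INR m)
  end.

Definition B2 (n : nat) : R :=
  sum_f_R0 (fun j => (Binomial.C n j * poch (1/2) j * poch (1/2) (n - j)) ^ 2) n.

(* Main.v *)
Require Import Defs.
From Stdlib Require Import Reals Arith Lra Lia Psatz.
From Coquelicot Require Import Coquelicot.
Open Scope R_scope.

Definition p (n : nat) : R := poch (1/2) n / INR (fact n).

Lemma p0 : p 0 = 1.
Proof. unfold p; simpl; field. Qed.

Lemma pS n : p (S n) = p n * ((INR n + 1/2) / (INR n + 1)).
Proof.
  unfold p. simpl poch. rewrite fact_simpl, mult_INR, S_INR.
  assert (0 < INR (fact n)) by (apply lt_0_INR; apply lt_O_fact).
  assert (0 <= INR n) by apply pos_INR.
  field; lra.
Qed.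

Lemma p_bounds n : 0 <= p n <= 1.
Proof.
  induction n. rewrite p0; lra.
  rewrite pS. assert (0 <= INR n) by apply pos_INR.
  assert (0 <= (INR n + 1/2) / (INR n + 1) <= 1).
  { split. apply Rdiv_le_0_compat; lra.
    apply Rmult_le_reg_r with (INR n + 1). lra.
    unfold Rdiv; rewrite Rmult_assoc, Rinv_l; lra. }
  destruct IHn, H0. split; nra.
Qed.

Lemma pow_le_one (r : R) n : 0 <= r <= 1 -> r ^ n <= 1.
Proof.
  intros H; induction n; simpl. lra.
  rewrite <- (Rmult_1_r 1). apply Rmult_le_compat; try lra. apply pow_le; lra.
Qed.

Lemma radius_ge1 (a : nat -> R) (y : R) :
  (forall n, Rabs (a n) <= 1) -> Rabs y < 1 -> Rbar_lt (Rabs y) (CV_radius a).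
Proof.
  intros Ha Hy.
  destruct (CV_radius_bounded a) as [Hub _].
  set (r := (Rabs y + 1) / 2).
  assert (0 <= Rabs y) by apply Rabs_pos.
  assert (Hr : Rbar_le r (CV_radius a)).
  { apply Hub. exists 1. intros n. rewrite Rabs_mult.
    rewrite <- (Rmult_1_r 1). apply Rmult_le_compat; try apply Rabs_pos; auto.
    rewrite <- RPow_abs. apply pow_le_one. split. apply Rabs_pos.
    unfold r; rewrite Rabs_pos_eq; lra. }
  eapply Rbar_lt_le_trans; [|exact Hr]. simpl. unfold r; lra.
Qed.

Lemma ser_minus (a b : nat -> R) (la lb : R) : is_series a la -> is_series b lb ->
  is_series (fun n => a n - b n) (la - lb).
Proof. intros H1 H2. exact (is_series_minus a b la lb H1 H2). Qed.

Lemma ser_plus (a b : nat -> R) (la lb : R) : is_series a la -> is_series b lb ->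
  is_series (fun n => a n + b n) (la + lb).
Proof. intros H1 H2. exact (is_series_plus a b la lb H1 H2). Qed.

Lemma ser_scal (c : R) (a : nat -> R) (la : R) : is_series a la -> is_series (fun n => c * a n) (c * la).
Proof. intros H. exact (is_series_scal c a la H). Qed.

Lemma ser_shift (a : nat -> R) (l : R) : is_series (fun k => a (S k)) l -> is_series a (l + a O).
Proof.
  intros H. apply is_series_decr_1.
  change (plus (l + a O) (opp (a O))) with (l + a O - a O).
  replace (l + a O - a O) with l by ring. exact H.
Qed.

Lemma ser_ext (a b : nat -> R) (l : R) : (forall n, a n = b n) -> is_series a l -> is_series b l.
Proof. apply is_series_ext. Qed.

Lemma ser_uniq (a : nat -> R) (l1 l2 : R) : is_series a l1 -> is_series a l2 -> l1 = l2.
Proof. intros H1 H2. rewrite <- (is_series_unique a l1 H1). now apply is_series_unique. Qed.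

Lemma pser_is (a : nat -> R) y : (forall n, Rabs (a n) <= 1) -> Rabs y < 1 ->
  is_series (fun n => a n * y ^ n) (PSeries a y).
Proof.
  intros Ha Hy. apply is_pseries_R. apply PSeries_correct.
  apply CV_radius_inside. now apply radius_ge1.
Qed.

Lemma p_abs n : Rabs (p n) <= 1.
Proof. destruct (p_bounds n). rewrite Rabs_pos_eq; lra. Qed.

Definition Sb (y : R) := PSeries p y.

Lemma Sb_deriv y : Rabs y < 1 ->
  is_derive Sb y (PSeries (PS_derive p) y) /\
  (1 - y) * PSeries (PS_derive p) y = Sb y / 2.
Proof.
  intros Hy. split.
  { apply is_derive_PSeries. now apply radius_ge1; [apply p_abs|]. }
  assert (Hr : Rbar_lt (Rabs y) (CV_radius (PS_derive p))).
  { rewrite CV_radius_derive. now apply radius_ge1; [apply p_abs|]. }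
  set (D := PSeries (PS_derive p) y).
  assert (HD : is_series (fun n => PS_derive p n * y ^ n) D).
  { apply is_pseries_R. apply PSeries_correct. now apply CV_radius_inside. }
  assert (HyD : is_series (fun n => INR n * p n * y ^ n) (y * D + 0)).
  { replace 0 with (INR 0 * p 0 * y ^ 0) by (simpl; ring).
    apply ser_shift. eapply ser_ext; [|apply (ser_scal y _ _ HD)].
    intros n. unfold PS_derive. change (y ^ S n) with (y * y ^ n). ring. }
  assert (H := ser_minus _ _ _ _ HD HyD).
  assert (HS : is_series (fun n => p n * y ^ n) (Sb y)) by (apply pser_is; [apply p_abs|auto]).
  assert (H2 := ser_scal (1/2) _ _ HS).
  assert (E : D - (y * D + 0) = 1/2 * Sb y).
  { eapply ser_uniq; [exact H|]. eapply ser_ext; [|exact H2].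
    intros n. unfold PS_derive. rewrite pS, S_INR.
    assert (0 <= INR n) by apply pos_INR. field. lra. }
  lra.
Qed.

Lemma ser_ge0 (u : nat -> R) (l : R) : is_series u l -> (forall n, 0 <= u n) -> u O <= l.
Proof.
  intros H Hu.
  assert (Hs : forall N, u O <= sum_n u N).
  { induction N. rewrite sum_O; lra. rewrite sum_Sn. change (plus (sum_n u N) (u (S N))) with (sum_n u N + u (S N)).
    specialize (Hu (S N)); lra. }
  assert (Hl : is_lim_seq (sum_n u) l) by exact H.
  assert (H2 := is_lim_seq_le (fun _ => u O) (sum_n u) (u O) l Hs (is_lim_seq_const _) Hl).
  exact H2.
Qed.

Lemma Sb_ge1 y : 0 <= y < 1 -> 1 <= Sb y.
Proof.
  intros Hy. assert (H := pser_is p y p_abs ltac:(rewrite Rabs_pos_eq; lra)).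
  apply ser_ge0 in H. rewrite p0 in H; simpl in H. unfold Sb; lra.
  intros n. apply Rmult_le_pos. apply p_bounds. apply pow_le; lra.
Qed.

Lemma Sb_sq y : 0 <= y < 1 -> Sb y * Sb y * (1 - y) = 1.
Proof.
  intros Hy.
  set (g := fun z => Sb z * Sb z * (1 - z)).
  assert (Hd : forall z, Rabs z < 1 -> is_derive g z 0).
  { intros z Hz. destruct (Sb_deriv z Hz) as [H1 H2].
    assert (H3 := Derive.is_derive_mult _ _ _ _ _ H1 H1).
    assert (H4 : is_derive (fun t => 1 - t) z (-1)).
    { auto_derive. auto. ring. }
    assert (H5 := Derive.is_derive_mult _ _ _ _ _ H3 H4).
    unfold g. replace 0 with
      ((PSeries (PS_derive p) z * Sb z + Sb z * PSeries (PS_derive p) z) * (1 - z) + Sb z * Sb z * -1).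
    exact H5. nra. }
  destruct (MVT_gen g 0 y (fun _ => 0)) as [c [Hc Hc2]].
  { intros x Hx. apply Hd. rewrite Rmin_left, Rmax_right in Hx by lra.
    rewrite Rabs_pos_eq; lra. }
  { intros x Hx. rewrite Rmin_left, Rmax_right in Hx by lra.
    apply continuity_pt_filterlim. apply (ex_derive_continuous g).
    exists 0. apply Hd. rewrite Rabs_pos_eq; lra. }
  assert (g 0 = 1).
  { unfold g, Sb. rewrite PSeries_0, p0. ring. }
  unfold g in *. lra.
Qed.

Lemma Sb_val y : 0 <= y < 1 -> Sb y = / sqrt (1 - y).
Proof.
  intros Hy. assert (H1 := Sb_sq y Hy). assert (H2 := Sb_ge1 y Hy).
  assert (Hs : 0 < sqrt (1 - y)) by (apply sqrt_lt_R0; lra).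
  assert (Hs2 : sqrt (1 - y) * sqrt (1 - y) = 1 - y) by (apply sqrt_sqrt; lra).
  assert (Sb y * sqrt (1 - y) = 1).
  { assert (E: (Sb y * sqrt (1 - y)) * (Sb y * sqrt (1 - y)) = 1) by nra.
    assert (0 < Sb y * sqrt (1 - y)) by nra. nra. }
  field_simplify_eq; lra.
Qed.

Lemma binom_ser y : 0 <= y < 1 -> is_series (fun n => p n * y ^ n) (/ sqrt (1 - y)).
Proof.
  intros Hy. rewrite <- Sb_val by auto. apply pser_is. apply p_abs. rewrite Rabs_pos_eq; lra.
Qed.

Definition W (n : nat) : R := RInt (fun t => sin t ^ (2 * n)) 0 (PI / 2).

Lemma cont_sinpow k x : continuous (fun t => sin t ^ k) x.
Proof. apply (ex_derive_continuous (fun t => sin t ^ k)). auto_derive. auto. Qed.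

Lemma exRInt_sinpow k a b : ex_RInt (fun t => sin t ^ k) a b.
Proof. apply (ex_RInt_continuous (V:=R_CompleteNormedModule)). intros; apply cont_sinpow. Qed.

Lemma W_rec n : W (S n) = W n * ((INR n + 1/2) / (INR n + 1)).
Proof.
  set (f := fun t => cos t * sin t ^ S (2 * n)).
  set (df := fun t => INR (S (2 * n)) * sin t ^ (2 * n) - INR (S (S (2 * n))) * sin t ^ (2 * S n)).
  assert (H : is_RInt df 0 (PI / 2) (minus (f (PI / 2)) (f 0))).
  { apply (is_RInt_derive (V:=R_CompleteNormedModule)).
    - intros x _. unfold f, df.
      replace (2 * S n)%nat with (S (S (2 * n))) by lia.
      generalize (2 * n)%nat; intros m.
      auto_derive. auto.
      change (match m with 0%nat => 1 | S _ => INR m + 1 end) with (INR (S m)).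
      rewrite !S_INR. assert (Hc := sin2_cos2 x). unfold Rsqr in Hc.
      simpl pow. replace (cos x * cos x) with (1 - sin x * sin x) by lra. idtac.
      replace (cos x * (1 * cos x * ((INR m + 1) * sin x ^ m))) with ((cos x * cos x) * ((INR m + 1) * sin x ^ m)) by ring.
      replace (cos x * cos x) with (1 - sin x * sin x) by lra. ring.
    - intros x _. unfold df. apply (ex_derive_continuous (fun t => INR (S (2 * n)) * sin t ^ (2 * n) - INR (S (S (2 * n))) * sin t ^ (2 * S n))). auto_derive. auto. }
  assert (Hv : minus (f (PI / 2)) (f 0) = 0).
  { unfold f. rewrite cos_PI2, sin_0. simpl. unfold minus, plus, opp; simpl. ring. }
  rewrite Hv in H.
  assert (A : is_RInt (fun t => sin t ^ (2 * n)) 0 (PI / 2) (W n)).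
  { apply (RInt_correct (V:=R_CompleteNormedModule)). apply exRInt_sinpow. }
  assert (B : is_RInt (fun t => sin t ^ (2 * S n)) 0 (PI / 2) (W (S n))).
  { apply (RInt_correct (V:=R_CompleteNormedModule)). apply exRInt_sinpow. }
  assert (C := is_RInt_minus _ _ _ _ _ _ (is_RInt_scal _ _ _ (INR (S (2 * n))) _ A)
                 (is_RInt_scal _ _ _ (INR (S (S (2 * n)))) _ B)).
  assert (C' : is_RInt df 0 (PI / 2) (INR (S (2 * n)) * W n - INR (S (S (2 * n))) * W (S n))).
  { eapply is_RInt_ext; [|exact C]. intros; reflexivity. }
  assert (E := is_RInt_unique _ _ _ _ C'). rewrite (is_RInt_unique _ _ _ _ H) in E.
  rewrite !S_INR, mult_INR in E. simpl (INR 2) in E.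
  assert (0 <= INR n) by apply pos_INR.
  field_simplify_eq; [|lra]. lra.
Qed.

Lemma W_val n : W n = PI / 2 * p n.
Proof.
  induction n.
  - unfold W. simpl. rewrite RInt_const. rewrite p0. unfold scal; simpl. unfold mult; simpl. ring.
  - rewrite W_rec, pS, IHn. ring.
Qed.

Lemma tail_bound (u : nat -> R) (l x : R) : 0 <= x < 1 -> (forall n, Rabs (u n) <= x ^ n) ->
  is_series u l -> forall N, Rabs (l - sum_n u N) <= x ^ (S N) / (1 - x).
Proof.
  intros Hx Hu Hl N.
  assert (Hm : forall m, Rabs (sum_n u (m + N) - sum_n u N) <= x ^ (S N) * (1 - x ^ m) / (1 - x)).
  { induction m.
    - rewrite Nat.add_0_l. replace (sum_n u N - sum_n u N) with 0 by ring. rewrite Rabs_R0.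
      simpl pow. replace (x ^ S N * (1 - 1) / (1 - x)) with 0 by (field; lra). lra.
    - rewrite Nat.add_succ_l. rewrite sum_Sn. change (plus (sum_n u (m + N)) (u (S (m + N)))) with (sum_n u (m + N) + u (S (m + N))).
      replace (sum_n u (m + N) + u (S (m + N)) - sum_n u N) with ((sum_n u (m + N) - sum_n u N) + u (S (m + N))) by ring.
      eapply Rle_trans. apply Rabs_triang. eapply Rle_trans. apply Rplus_le_compat. exact IHm. apply Hu.
      replace (x ^ S (m + N)) with (x ^ S N * x ^ m) by (rewrite <- pow_add; f_equal; lia).
      right. simpl. field. lra. }
  assert (Hlim : is_lim_seq (fun m => Rabs (sum_n u (m + N) - sum_n u N)) (Rabs (l - sum_n u N))).
  { apply (is_lim_seq_abs _ (Finite (l - sum_n u N))). apply (is_lim_seq_minus _ _ l (sum_n u N)).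
    apply (is_lim_seq_incr_n (sum_n u) N l). exact Hl. apply is_lim_seq_const. reflexivity. }
  assert (Hb : forall m, Rabs (sum_n u (m + N) - sum_n u N) <= x ^ (S N) / (1 - x)).
  { intros m. eapply Rle_trans. apply Hm. unfold Rdiv. apply Rmult_le_compat_r.
    left; apply Rinv_0_lt_compat; lra. assert (0 <= x ^ m) by (apply pow_le; lra).
    assert (0 <= x ^ S N) by (apply pow_le; lra). nra. }
  assert (H := is_lim_seq_le _ _ _ _ Hb Hlim (is_lim_seq_const _)). exact H.
Qed.

Lemma sin2_bounds t : 0 <= sin t ^ 2 <= 1.
Proof.
  assert (H := sin2_cos2 t). unfold Rsqr in H. simpl. split. nra.
  assert (0 <= cos t * cos t) by nra. nra.
Qed.

Lemma integ_series (a : nat -> R) (h : R -> R) (x : R) : 0 <= x < 1 ->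
  (forall n, Rabs (a n) <= 1) ->
  (forall y, 0 <= y <= x -> is_series (fun n => a n * y ^ n) (h y)) ->
  is_series (fun n => a n * x ^ n * W n) (RInt (fun t => h (x * sin t ^ 2)) 0 (PI / 2)).
Proof.
  intros Hx Ha Hh.
  set (fN := fun (N : nat) (t : R) => sum_n (fun n => a n * (x * sin t ^ 2) ^ n) N).
  set (g := fun t => h (x * sin t ^ 2)).
  set (hN := fun N => sum_n (fun n => a n * x ^ n * W n) N).
  assert (Hterm : forall n, is_RInt (fun t => a n * (x * sin t ^ 2) ^ n) 0 (PI / 2) (a n * x ^ n * W n)).
  { intros n.
    assert (H := is_RInt_scal (fun t => sin t ^ (2 * n)) 0 (PI / 2) (a n * x ^ n) (W n)
                   (RInt_correct (V:=R_CompleteNormedModule) _ _ _ (exRInt_sinpow (2 * n) 0 (PI/2)))).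
    change (is_RInt (fun t => a n * x ^ n * sin t ^ (2 * n)) 0 (PI / 2) (a n * x ^ n * W n)) in H.
    eapply is_RInt_ext; [|exact H]. intros t _. cbv beta. rewrite Rpow_mult_distr, pow_mult. change (a n * x ^ n * (sin t ^ 2) ^ n = a n * (x ^ n * (sin t ^ 2) ^ n)). ring. }
  assert (Hint : forall N, is_RInt (fN N) 0 (PI / 2) (hN N)).
  { intros N. unfold fN, hN. induction N.
    - apply (is_RInt_ext (V:=R_CompleteNormedModule) (fun t => a 0%nat * (x * sin t ^ 2) ^ 0)).
      intros t _. rewrite sum_O. reflexivity.
      rewrite sum_O. exact (Hterm 0%nat).
    - assert (H := is_RInt_plus (V:=R_CompleteNormedModule)
         (fun t => sum_n (fun n => a n * (x * sin t ^ 2) ^ n) N)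
         (fun t => a (S N) * (x * sin t ^ 2) ^ (S N)) 0 (PI / 2) _ _ IHN (Hterm (S N))).
      apply (is_RInt_ext (V:=R_CompleteNormedModule) (fun t => plus (sum_n (fun n => a n * (x * sin t ^ 2) ^ n) N) (a (S N) * (x * sin t ^ 2) ^ (S N)))).
      intros t _. rewrite sum_Sn. reflexivity.
      rewrite sum_Sn. exact H. }
  assert (Hu : filterlim fN eventually (locally (T := fct_UniformSpace R R_CompleteNormedModule) g)).
  { intros P [eps HP].
    assert (Hq : 0 < eps * (1 - x)) by (destruct eps; simpl; nra).
    destruct (pow_lt_1_zero x ltac:(rewrite Rabs_pos_eq; lra) _ Hq) as [N0 HN0].
    exists N0. intros N HN. apply HP. intros t.
    assert (Ht := sin2_bounds t).
    set (y := x * sin t ^ 2).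
    assert (Hy : 0 <= y <= x) by (unfold y; nra).
    assert (Hs := Hh y Hy).
    assert (Hb := tail_bound (fun n => a n * y ^ n) (h y) x Hx).
    assert (Hb2 : Rabs (h y - fN N t) <= x ^ S N / (1 - x)).
    { apply Hb; auto. intros n. rewrite Rabs_mult. rewrite <- RPow_abs. rewrite (Rabs_pos_eq y) by lra.
      rewrite <- (Rmult_1_l (x ^ n)). apply Rmult_le_compat; auto. apply Rabs_pos. apply pow_le; lra.
      apply pow_incr; lra. }
    assert (HN1 := HN0 (S N) ltac:(lia)). rewrite Rabs_pos_eq in HN1 by (apply pow_le; lra).
    change (Rabs (fN N t - g t) < eps).
    rewrite Rabs_minus_sym. eapply Rle_lt_trans. exact Hb2.
    apply Rmult_lt_reg_r with (1 - x). lra. unfold Rdiv. rewrite Rmult_assoc, Rinv_l; lra. }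
  destruct (filterlim_RInt fN 0 (PI / 2) eventually _ g hN Hint Hu) as [If [HIf HgI]].
  replace (RInt g 0 (PI / 2)) with If.
  exact HIf.
  symmetry. apply (is_RInt_unique (V:=R_CompleteNormedModule)). exact HgI.
Qed.

Definition q (n : nat) : R := match n with O => 1 | S m => p (S m) - p m end.

Lemma q_abs n : Rabs (q n) <= 1.
Proof.
  destruct n; simpl. rewrite Rabs_R1; lra.
  rewrite pS. destruct (p_bounds n). assert (0 <= INR n) by apply pos_INR.
  assert (0 <= (INR n + 1/2) / (INR n + 1) <= 1).
  { split. apply Rdiv_le_0_compat; lra.
    apply Rmult_le_reg_r with (INR n + 1). lra.
    unfold Rdiv; rewrite Rmult_assoc, Rinv_l; lra. }
  rewrite Rabs_left1 by nra. nra.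
Qed.

Lemma sqrt_ser y : 0 <= y < 1 -> is_series (fun n => q n * y ^ n) (sqrt (1 - y)).
Proof.
  intros Hy. assert (Hp := binom_ser y Hy).
  assert (Ha : is_series (fun n => match n with O => 0 | S m => p m * y ^ (S m) end) (y * / sqrt (1 - y) + 0)).
  { apply ser_shift. eapply ser_ext; [|exact (ser_scal y _ _ Hp)]. intros n. change (y * (p n * y ^ n) = p n * (y * y ^ n)). ring. }
  assert (H := ser_minus _ _ _ _ Hp Ha).
  assert (Hs : 0 < sqrt (1 - y)) by (apply sqrt_lt_R0; lra).
  assert (Hs2 : sqrt (1 - y) * sqrt (1 - y) = 1 - y) by (apply sqrt_sqrt; lra).
  replace (sqrt (1 - y)) with (/ sqrt (1 - y) - (y * / sqrt (1 - y) + 0)).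
  eapply ser_ext; [|exact H]. intros n; destruct n.
  change (p 0%nat * y ^ 0 - 0 = q 0%nat * y ^ 0). rewrite p0. simpl. ring.
  change (p (S n) * y ^ S n - p n * y ^ S n = (p (S n) - p n) * y ^ S n). ring.
  field_simplify_eq; lra.
Qed.

Lemma K_ser k : 0 < k < 1 -> is_series (fun n => p n * p n * (k ^ 2) ^ n) (2 / PI * ellK k).
Proof.
  intros Hk. assert (Hx : 0 <= k ^ 2 < 1) by (simpl; nra).
  assert (H := integ_series p (fun y => / sqrt (1 - y)) (k ^ 2) Hx p_abs
    (fun y Hy => binom_ser y ltac:(lra))).
  assert (H2 := ser_scal (2 / PI) _ _ H). unfold ellK.
  eapply ser_ext; [|exact H2]. intros n. cbv beta. rewrite W_val.
  assert (PI > 0) by apply PI_RGT_0. field. lra.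
Qed.

Lemma E_ser k : 0 < k < 1 -> is_series (fun n => q n * p n * (k ^ 2) ^ n) (2 / PI * ellE k).
Proof.
  intros Hk. assert (Hx : 0 <= k ^ 2 < 1) by (simpl; nra).
  assert (H := integ_series q (fun y => sqrt (1 - y)) (k ^ 2) Hx q_abs
    (fun y Hy => sqrt_ser y ltac:(lra))).
  assert (H2 := ser_scal (2 / PI) _ _ H). unfold ellE.
  eapply ser_ext; [|exact H2]. intros n. cbv beta. rewrite W_val.
  assert (PI > 0) by apply PI_RGT_0. field. lra.
Qed.

Lemma ser_n (a : nat -> R) (x : R) : (forall n, Rabs (a n) <= 1) -> 0 <= x < 1 ->
  exists H, is_series (fun n => INR n * a n * x ^ n) H.
Proof.
  intros Ha Hx.
  assert (Hr : Rbar_lt (Rabs x) (CV_radius (PS_derive a))).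
  { rewrite CV_radius_derive. apply radius_ge1; auto. rewrite Rabs_pos_eq; lra. }
  set (D := PSeries (PS_derive a) x).
  assert (HD : is_series (fun n => PS_derive a n * x ^ n) D).
  { apply is_pseries_R. apply PSeries_correct. now apply CV_radius_inside. }
  exists (x * D + INR 0 * a 0%nat * x ^ 0).
  apply ser_shift. eapply ser_ext; [|apply (ser_scal x _ _ HD)].
  intros n. unfold PS_derive. change (x ^ S n) with (x * x ^ n). ring.
Qed.

Definition c (n : nat) : R := p n * p n.

Lemma c_nonneg n : 0 <= c n.
Proof. unfold c. destruct (p_bounds n). nra. Qed.

Lemma c_abs n : Rabs (c n) <= 1.
Proof. unfold c. destruct (p_bounds n). rewrite Rabs_pos_eq; nra. Qed.

Lemma Bcoef n : B2 n / INR (fact n) ^ 2 = sum_f_R0 (fun j => c j * c (n - j)) n.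
Proof.
  unfold B2, Rdiv. rewrite Rmult_comm, scal_sum. apply sum_eq. intros j Hj.
  unfold Binomial.C, c, p. change (1 * / 2) with (1 / 2).
  assert (0 < INR (fact n)) by (apply lt_0_INR; apply lt_O_fact).
  assert (0 < INR (fact j)) by (apply lt_0_INR; apply lt_O_fact).
  assert (0 < INR (fact (n - j))) by (apply lt_0_INR; apply lt_O_fact).
  field. lra.
Qed.

Lemma pow_split (x : R) k n : (k <= n)%nat -> x ^ k * x ^ (n - k) = x ^ n.
Proof. intros H. rewrite <- pow_add. f_equal. lia. Qed.

Lemma ex_abs (u : nat -> R) l : is_series u l -> (forall n, 0 <= u n) -> ex_series (fun n => Rabs (u n)).
Proof.
  intros H Hu. exists l. eapply ser_ext; [|exact H]. intros n. rewrite Rabs_pos_eq; auto.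
Qed.

Theorem theorem2p2 (r k : R) (hr : 0 < r) (hk : is_singular_modulus r k) :
  is_series
    (fun n : nat =>
       B2 n / (INR (fact n)) ^ 2 * k ^ (2 * n) *
       (sqrt r * (1 - k ^ 2) * INR n + alpha_fn r k - sqrt r * k ^ 2))
    (1 / PI).
Proof.
  destruct hk as [Hk _].
  set (x := k ^ 2).
  assert (Hx : 0 <= x < 1) by (unfold x; simpl; nra).
  assert (HPI : PI > 0) by apply PI_RGT_0.
  assert (HF : is_series (fun n => c n * x ^ n) (2 / PI * ellK k)) by exact (K_ser k Hk).
  assert (HG : is_series (fun n => q n * p n * x ^ n) (2 / PI * ellE k)) by exact (E_ser k Hk).
  set (F := 2 / PI * ellK k) in *.
  set (G := 2 / PI * ellE k) in *.
  destruct (ser_n c x c_abs Hx) as [H HH].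
  assert (HxN : forall n, 0 <= x ^ n) by (intros; apply pow_le; lra).
  assert (F1 : 1 <= F).
  { assert (T := ser_ge0 _ _ HF). simpl in T. unfold c in T. rewrite p0 in T.
    apply (Rle_trans _ (1 * 1 * 1)). lra. apply T.
    intros n. apply Rmult_le_pos; auto. apply c_nonneg. }
  assert (HU : is_series (fun n => (1 + 2 * INR n) * c n * x ^ n) (F + 2 * H)).
  { eapply ser_ext; [|exact (ser_plus _ _ _ _ HF (ser_scal 2 _ _ HH))].
    intros n. cbv beta. ring. }
  assert (HU2 : is_series (fun n => match n with O => 0 | S m => (1 + 2 * INR m) * c m * x ^ (S m) end)
                  (x * (F + 2 * H) + 0)).
  { apply ser_shift. eapply ser_ext; [|exact (ser_scal x _ _ HU)].
    intros n. change (x * ((1 + 2 * INR n) * c n * x ^ n) = (1 + 2 * INR n) * c n * (x * x ^ n)). ring. }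
  assert (EG : G = F + 2 * H - (x * (F + 2 * H) + 0)).
  { eapply ser_uniq; [exact HG|]. eapply ser_ext; [|exact (ser_minus _ _ _ _ HU HU2)].
    intros n. destruct n.
    - change ((1 + 2 * INR 0) * c 0%nat * x ^ 0 - 0 = q 0%nat * p 0%nat * x ^ 0).
      unfold c; simpl. rewrite p0. ring.
    - change ((1 + 2 * INR (S n)) * c (S n) * x ^ S n - (1 + 2 * INR n) * c n * x ^ S n
              = (p (S n) - p n) * p (S n) * x ^ S n).
      unfold c. rewrite S_INR, pS. assert (0 <= INR n) by apply pos_INR. field. lra. }
  assert (HFa : ex_series (fun n => Rabs (c n * x ^ n))).
  { apply (ex_abs _ _ HF). intros; apply Rmult_le_pos; auto; apply c_nonneg. }
  assert (HHa : ex_series (fun n => Rabs (INR n * c n * x ^ n))).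
  { apply (ex_abs _ _ HH). intros; apply Rmult_le_pos; auto. apply Rmult_le_pos. apply pos_INR. apply c_nonneg. }
  assert (P1 := is_series_mult _ _ _ _ HF HF HFa HFa).
  assert (P2 := is_series_mult _ _ _ _ HF HH HFa HHa).
  assert (P3 := is_series_mult _ _ _ _ HH HF HHa HFa).
  assert (Q1 : is_series (fun n => sum_f_R0 (fun j => c j * c (n - j)) n * x ^ n) (F * F)).
  { eapply ser_ext; [|exact P1]. intros n. rewrite Rmult_comm, scal_sum. apply sum_eq.
    intros j Hj. rewrite <- (pow_split x j n Hj). ring. }
  assert (Q2 : is_series (fun n => INR n * sum_f_R0 (fun j => c j * c (n - j)) n * x ^ n) (F * H + H * F)).
  { eapply ser_ext; [|exact (ser_plus _ _ _ _ P2 P3)]. intros n. cbv beta.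
    rewrite <- sum_plus.
    transitivity ((INR n * x ^ n) * sum_f_R0 (fun j => c j * c (n - j)) n); [|ring].
    rewrite scal_sum. apply sum_eq.
    intros j Hj. rewrite <- (pow_split x j n Hj). rewrite minus_INR by auto. ring. }
  set (s := sqrt r).
  set (A := alpha_fn r k - s * x).
  assert (Fin := ser_plus _ _ _ _ (ser_scal (s * (1 - x)) _ _ Q2) (ser_scal A _ _ Q1)).
  replace (1 / PI) with (s * (1 - x) * (F * H + H * F) + A * (F * F)).
  - eapply ser_ext; [|exact Fin]. intros n. cbv beta. rewrite Bcoef, pow_mult. fold x.
    unfold A. ring.
  - unfold A, alpha_fn.
    replace (ellK k) with (PI / 2 * F) by (unfold F; field; lra).
    replace (ellE k) with (PI / 2 * G) by (unfold G; field; lra).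
    rewrite EG. fold s. clearbody x F G s. field. split; lra.
Qed.
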